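(* Let $f\in\mathbb{R}[X_1,\dots,X_n]$ be a form of degree $2d$. If $$f_{2d,i}\ge \sum_{\alpha\in\Delta,\ \alpha_i\ne 0}\alpha_i\left(\frac{|f_{\alpha}|}{2d}\right)^{2d/(\alpha_in_{\alpha})}\quad\text{for } i=1,\dots,n,$$ where $n_{\alpha}:=|\{i:\alpha_i\neq0\}|$, then $f$ is SOBS.
   Context: For $\alpha\in\mathbb{N}^n$ write $\underline{X}^\alpha=X_1^{\alpha_1}\cdots X_n^{\alpha_n}$. For $f=\sum_\alpha f_\alpha\underline{X}^\alpha$ of degree $2d$, $f_{2d,i}$ denotes the coefficient of $X_i^{2d}$, $\Omega=\{\alpha: f_\alpha\ne0\}\setminus\{\underline{0},2d\epsilon_1,\dots,2d\epsilon_n\}$ ($\epsilon_i$ the standard unit vectors), and $\Delta=\{\alpha\in\Omega:\ f_\alpha<0\text{ or }\alpha_i\text{ odd for some }i\}$. SOBS means a finite sum of squares of polynomials of the form $a\underline{X}^\alpha-b\underline{X}^\beta$, $a,b\in\mathbb{R}$. *)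

(* Defs.v *)
From mathcomp Require Import all_boot all_algebra.
From mathcomp Require Import mpoly.
From mathcomp Require Import Rstruct.
From Stdlib Require Rpower.
Set Implicit Arguments. Unset Strict Implicit. Unset Printing Implicit Defensive.
Import GRing.Theory Num.Theory.
Local Open Scope ring_scope.

Notation RR := Rdefinitions.R.

Definition mono2d (n d : nat) (i : 'I_n) : 'X_{1..n} :=
  [multinom (if j == i then (2 * d)%N else 0%N) | j < n].

Definition inOmega (n d : nat) (f : {mpoly RR[n]}) (a : 'X_{1..n}) : bool :=
  [&& f@_a != 0, a != 0%MM & [forall i : 'I_n, a != mono2d d i]].

Definition inDelta (n d : nat) (f : {mpoly RR[n]}) (a : 'X_{1..n}) : bool :=
  inOmega d f a && ((f@_a < 0) || [exists i : 'I_n, odd (a i)]).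

Definition nalpha (n : nat) (a : 'X_{1..n}) : nat := #|[pred i : 'I_n | a i != 0%N]|.

(* sum_{alpha in Delta, alpha_i <> 0} alpha_i (|f_alpha|/2d)^(2d/(alpha_i n_alpha)) ;
   Delta is contained in the support of f, so we sum over msupp f. *)
Definition rhs_bound (n d : nat) (f : {mpoly RR[n]}) (i : 'I_n) : RR :=
  \sum_(a <- msupp f | inDelta d f a && (a i != 0%N))
     (a i)%:R * Rpower.Rpower (`|f@_a| / (2 * d)%:R)
                              ((2 * d)%:R / (a i * nalpha a)%:R).

Definition SOBS (n : nat) (f : {mpoly RR[n]}) : Prop :=
  exists s : seq (RR * RR * 'X_{1..n} * 'X_{1..n}),
    f = \sum_(t <- s) (t.1.1.1 *: 'X_[t.1.2] - t.1.1.2 *: 'X_[t.2]) ^+ 2.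

(* Main.v *)
Require Import Defs.
From mathcomp Require Import all_boot all_algebra.
From mathcomp Require Import mpoly.
From mathcomp Require Import Rstruct.
From mathcomp Require Import ring.
From Stdlib Require Rpower Exp_prop.
From mathcomp Require Import order.
Import Order.TTheory.
Import GRing.Theory Num.Theory.
Set Implicit Arguments. Unset Strict Implicit. Unset Printing Implicit Defensive.
Local Open Scope ring_scope.

Definition Tc n (t : 'I_n -> RR) (e : 'X_{1..n}) : RR := \prod_(k < n) t k ^+ e k.
Definition Y n (t : 'I_n -> RR) (e : 'X_{1..n}) : {mpoly RR[n]} := Tc t e *: 'X_[e].

Lemma Y_mul n (t : 'I_n -> RR) e1 e2 : Y t e1 * Y t e2 = Y t (e1 + e2)%MM.
Proof.
rewrite /Y -scalerAl -scalerAr scalerA mpolyXD; congr (_ *: _).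
by rewrite /Tc -big_split; apply: eq_bigr => k _; rewrite mnmDE exprD.
Qed.

Lemma Y_exp n (t : 'I_n -> RR) e k : Y t e ^+ k = Y t (e *+ k)%MM.
Proof.
elim: k => [|k IH].
  rewrite expr0 /Y /Tc (eq_bigr (fun _ => 1)) ?big1 ?scale1r //; last first.
    by move=> i _; rewrite mulmnE muln0 expr0.
  have -> : (e *+ 0)%MM = 0%MM by apply/mnmP => i; rewrite !mulmnE ?mnm0E ?muln0.
  by rewrite mpolyX0.
rewrite exprS IH Y_mul; congr (Y t _).
by apply/mnmP => i; rewrite mnmDE !mulmnE mulnS.
Qed.

Lemma SOBS0 n : SOBS (0 : {mpoly RR[n]}).
Proof. by exists [::]; rewrite big_nil. Qed.

Lemma SOBSD n (f g : {mpoly RR[n]}) : SOBS f -> SOBS g -> SOBS (f + g).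
Proof. by move=> [s1 ->] [s2 ->]; exists (s1 ++ s2); rewrite big_cat. Qed.

Lemma SOBSZ n (c : RR) (f : {mpoly RR[n]}) : 0 <= c -> SOBS f -> SOBS (c *: f).
Proof.
move=> c0 [s ->]; exists [seq (Num.sqrt c * t.1.1.1, Num.sqrt c * t.1.1.2, t.1.2, t.2) | t <- s].
rewrite big_map scaler_sumr; apply: eq_bigr => t _ /=.
by rewrite -!scalerA -scalerBr exprZn sqr_sqrtr.
Qed.

Lemma SOBS_sum n (I : Type) (r : seq I) (P : pred I) (F : I -> {mpoly RR[n]}) :
  (forall i, P i -> SOBS (F i)) -> SOBS (\sum_(i <- r | P i) F i).
Proof.
move=> H; elim: r => [|x r IH]; first by rewrite big_nil; exact: SOBS0.
rewrite big_cons; case: ifP => Px //; exact: SOBSD (H _ Px) IH.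
Qed.

Lemma SOBS_Ysq n (t : 'I_n -> RR) e1 e2 : SOBS ((Y t e1 - Y t e2) ^+ 2).
Proof. by exists [:: (Tc t e1, Tc t e2, e1, e2)]; rewrite big_seq1. Qed.

Lemma SOBS_natdiv n (G : {mpoly RR[n]}) s : (0 < s)%N -> SOBS (G *+ s) -> SOBS G.
Proof.
move=> s0 H; have -> : G = (s%:R^-1 : RR) *: (G *+ s).
  by rewrite -scaler_nat scalerA mulVf ?scale1r // pnatr_eq0 -lt0n.
by apply: SOBSZ => //; rewrite invr_ge0 ler0n.
Qed.
Lemma T_cone (Rg : comRingType) (P : Rg -> Prop) (R u v : Rg) :
  P 0 -> (forall x y, P x -> P y -> P (x + y)) ->
  (forall k l, P (R * u ^+ k * v ^+ l * (u - v) ^+ 2)) ->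
  forall p q, P (R * (u ^+ (p + q) *+ p + v ^+ (p + q) *+ q - (u ^+ p * v ^+ q) *+ (p + q))).
Proof.
move=> P0 PD Pb.
pose Kc x := forall k l, P (R * u ^+ k * v ^+ l * x).
have K0 : Kc 0 by move=> k l; rewrite mulr0.
have KD x y : Kc x -> Kc y -> Kc (x + y).
  by move=> hx hy k l; rewrite mulrDr; apply: PD.
have Ku x : Kc x -> Kc (u * x).
  by move=> hx k l; have := hx k.+1 l; rewrite exprS; congr P; ring.
have Kv x : Kc x -> Kc (v * x).
  by move=> hx k l; have := hx k l.+1; rewrite exprS; congr P; ring.
have Kb r : Kc (v ^+ r * (u - v) ^+ 2).
  by move=> k l; have := Pb k (l + r)%N; rewrite exprD; congr P; ring.
have KE r : Kc ((u - v) * (u ^+ r - v ^+ r)).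
  elim: r => [|r IH]; first by rewrite !expr0 subrr mulr0.
  have -> : (u - v) * (u ^+ r.+1 - v ^+ r.+1) = u * ((u - v) * (u ^+ r - v ^+ r)) + v ^+ r * (u - v) ^+ 2.
    by rewrite !exprS; ring.
  by apply: KD; [apply: Ku|apply: Kb].
have KF p q : Kc (u ^+ p.+1 * (u ^+ q - v ^+ q) - (v ^+ (p + q) * (u - v)) *+ q).
  elim: q => [|q IH]; first by rewrite !expr0 subrr mulr0 mulr0n subrr.
  have -> : u ^+ p.+1 * (u ^+ q.+1 - v ^+ q.+1) - (v ^+ (p + q.+1) * (u - v)) *+ q.+1
     = v * (u ^+ p.+1 * (u ^+ q - v ^+ q) - (v ^+ (p + q) * (u - v)) *+ q)
       + (u - v) * (u ^+ (p + q).+1 - v ^+ (p + q).+1).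
    by rewrite addnS !exprS !exprD; ring.
  by apply: KD; [apply: Kv|apply: KE].
have KD2 p q : Kc (u ^+ (p + q) *+ p + v ^+ (p + q) *+ q - (u ^+ p * v ^+ q) *+ (p + q)).
  elim: p => [|p IH]; first by rewrite !add0n !mulr0n add0r expr0 mul1r subrr.
  have -> : u ^+ (p.+1 + q) *+ p.+1 + v ^+ (p.+1 + q) *+ q - (u ^+ p.+1 * v ^+ q) *+ (p.+1 + q)
     = u * (u ^+ (p + q) *+ p + v ^+ (p + q) *+ q - (u ^+ p * v ^+ q) *+ (p + q))
       + (u ^+ p.+1 * (u ^+ q - v ^+ q) - (v ^+ (p + q) * (u - v)) *+ q).
    by rewrite !addSn !exprS !exprD; ring.
  by apply: KD; [apply: Ku|apply: KF].
by move=> p q; have := KD2 p q 0%N 0%N; rewrite !expr0 !mulr1.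
Qed.

Lemma SOBS_muln n (G : {mpoly RR[n]}) k : SOBS G -> SOBS (G *+ k).
Proof. by move=> H; rewrite -scaler_nat; apply: SOBSZ => //; rewrite ler0n. Qed.

Definition Lsum n (t : 'I_n -> RR) (m : nat) (e : 'X_{1..n}) : {mpoly RR[n]} :=
  \sum_(k < n) Y t (U_(k) *+ m)%MM ^+ 2 *+ e k.

Lemma S_base n (t : 'I_n -> RR) (a : 'X_{1..n}) :
  (forall i j, a i != 0%N -> a j != 0%N -> i = j) ->
  SOBS (Lsum t (mdeg a) a - Y t a ^+ 2 *+ mdeg a).
Proof.
move=> Hu.
case: (boolP [exists k, a k != 0%N]) => [/existsP [k Hk]|].
  have ha : a = (U_(k) *+ a k)%MM.
    apply/mnmP => l; rewrite mulmnE mnm1E.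
    case: (eqVneq k l) => [->|kl]; first by rewrite mul1n.
    rewrite mul0n; apply/eqP; apply: contraT => hl.
    by move: kl; rewrite (Hu _ _ Hk hl) eqxx.
  have hm : mdeg a = a k by rewrite {1}ha mdegMn mdeg1 mul1n.
  rewrite hm /Lsum (bigD1 k) //= big1 ?addr0; last first.
    move=> l hl; suff -> : a l = 0%N by rewrite mulr0n.
    apply/eqP; apply: contraNT hl => hl; apply/eqP; exact: (Hu _ _ hl Hk).
  by rewrite -ha subrr; exact: SOBS0.
move=> /existsPn H0.
have a0 l : a l = 0%N by apply/eqP; have := H0 l; rewrite negbK.
have hm : mdeg a = 0%N by rewrite mdegE big1.
rewrite hm mulr0n subr0 /Lsum big1; first exact: SOBS0.
by move=> l _; rewrite a0 mulr0n.
Qed.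

Ltac fin := repeat (match goal with
  | H : is_true (?x != ?y) |- context [?x == ?y] => rewrite (negbTE H)
  | H : is_true (?x != ?y) |- context [?y == ?x] => rewrite (eq_sym y x)
  end); rewrite /= ?eqxx /= ?mul0n ?mul1n ?addn0 ?add0n ?muln0 ?muln1.

Lemma S_step n (t : 'I_n -> RR) (a : 'X_{1..n}) (i j : 'I_n) :
  i != j -> a i != 0%N -> a j != 0%N ->
  (forall b : 'X_{1..n}, (#|[pred l | b l != 0%N]| < #|[pred l | a l != 0%N]|)%N ->
      SOBS (Lsum t (mdeg b) b - Y t b ^+ 2 *+ mdeg b)) ->
  SOBS (Lsum t (mdeg a) a - Y t a ^+ 2 *+ mdeg a).
Proof.
move=> ij ai aj IH.
set s := (a i + a j)%N.
pose rho := [multinom (if (l == i) || (l == j) then 0%N else a l) | l < n].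
pose A := (rho + U_(j) *+ s)%MM.
pose B := (rho + U_(i) *+ s)%MM.
have ha : a = (rho + U_(i) *+ a i + U_(j) *+ a j)%MM.
  apply/mnmP => l; rewrite !mnmDE !mulmnE !mnm1E mnmE.
  by case: (eqVneq l i) => [->|li]; [|case: (eqVneq l j) => [->|lj]]; fin.
have hmA : mdeg A = mdeg a by rewrite ha !mdegD !mdegMn !mdeg1 !mul1n -addnA.
have hmB : mdeg B = mdeg a by rewrite ha !mdegD !mdegMn !mdeg1 !mul1n -addnA.
have Aval l : A l = if l == i then 0%N else if l == j then s else a l.
  rewrite !mnmDE !mulmnE !mnm1E mnmE.
  by case: (eqVneq l i) => [->|li]; [|case: (eqVneq l j) => [->|lj]]; fin.
have Bval l : B l = if l == j then 0%N else if l == i then s else a l.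
  rewrite !mnmDE !mulmnE !mnm1E mnmE.
  by case: (eqVneq l i) => [->|li]; [|case: (eqVneq l j) => [->|lj]]; fin.
have s0 : (0 < s)%N by rewrite /s addn_gt0 lt0n ai.
have cardA : (#|[pred l | A l != 0%N]| < #|[pred l | a l != 0%N]|)%N.
  apply: proper_card; apply/properP; split.
    apply/subsetP => l; rewrite !inE Aval.
    case: (l == i) => //; case: (eqVneq l j) => [->|] //.
  by exists i; rewrite !inE ?Aval ?eqxx.
have cardB : (#|[pred l | B l != 0%N]| < #|[pred l | a l != 0%N]|)%N.
  apply: proper_card; apply/properP; split.
    apply/subsetP => l; rewrite !inE Bval.
    case: (eqVneq l j) => [->|] //; case: (eqVneq l i) => [->|] //.
  by exists j; rewrite !inE ?Bval ?eqxx.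
have HA := IH A cardA; have HB := IH B cardB.
rewrite hmA in HA; rewrite hmB in HB.
set m := mdeg a in HA HB *.
have HL : Lsum t m a *+ s = Lsum t m A *+ a j + Lsum t m B *+ a i.
  rewrite /Lsum -!sumrMnl -big_split /=; apply: eq_bigr => l _.
  rewrite -!mulrnA -mulrnDr; congr (_ *+ _).
  rewrite Aval Bval; case: (eqVneq l i) => [->|li].
    by rewrite (negbTE ij) mul0n add0n mulnC.
  case: (eqVneq l j) => [->|lj]; first by rewrite mul0n addn0 mulnC.
  by rewrite -mulnDr addnC.
have Pb : forall k l, SOBS (Y t rho ^+ 2 * (Y t U_(i) ^+ 2) ^+ k * (Y t U_(j) ^+ 2) ^+ l *
      (Y t U_(i) ^+ 2 - Y t U_(j) ^+ 2) ^+ 2).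
  move=> k l.
  have -> : Y t rho ^+ 2 * (Y t U_(i) ^+ 2) ^+ k * (Y t U_(j) ^+ 2) ^+ l *
      (Y t U_(i) ^+ 2 - Y t U_(j) ^+ 2) ^+ 2
     = (Y t rho * Y t U_(i) ^+ k * Y t U_(j) ^+ l * Y t U_(i) ^+ 2
        - Y t rho * Y t U_(i) ^+ k * Y t U_(j) ^+ l * Y t U_(j) ^+ 2) ^+ 2.
    by rewrite -!exprM !(mulnC 2%N) !exprM; ring.
  by rewrite !Y_exp !Y_mul; exact: SOBS_Ysq.
have e1 : Y t rho * Y t U_(i) ^+ s = Y t B by rewrite Y_exp Y_mul.
have e2 : Y t rho * Y t U_(j) ^+ s = Y t A by rewrite Y_exp Y_mul.
have e3 : Y t rho * Y t U_(i) ^+ a i * Y t U_(j) ^+ a j = Y t a by rewrite !Y_exp !Y_mul -ha.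
have HT : SOBS (Y t B ^+ 2 *+ a i + Y t A ^+ 2 *+ a j - Y t a ^+ 2 *+ s).
  have := @T_cone _ (@SOBS n) (Y t rho ^+ 2) (Y t U_(i) ^+ 2) (Y t U_(j) ^+ 2)
    (SOBS0 n) (@SOBSD n) Pb (a i) (a j).
  have -> : Y t rho ^+ 2 * ((Y t U_(i) ^+ 2) ^+ (a i + a j) *+ a i +
         (Y t U_(j) ^+ 2) ^+ (a i + a j) *+ a j -
         ((Y t U_(i) ^+ 2) ^+ a i * (Y t U_(j) ^+ 2) ^+ a j) *+ (a i + a j))
     = (Y t rho * Y t U_(i) ^+ s) ^+ 2 *+ a i + (Y t rho * Y t U_(j) ^+ s) ^+ 2 *+ a j
       - (Y t rho * Y t U_(i) ^+ a i * Y t U_(j) ^+ a j) ^+ 2 *+ s.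
    by rewrite /s -!exprM !(mulnC 2%N) !exprM; ring.
  by rewrite e1 e2 e3.
apply: (SOBS_natdiv s0).
have -> : (Lsum t m a - Y t a ^+ 2 *+ m) *+ s =
   (Lsum t m A - Y t A ^+ 2 *+ m) *+ a j + (Lsum t m B - Y t B ^+ 2 *+ m) *+ a i
   + (Y t B ^+ 2 *+ a i + Y t A ^+ 2 *+ a j - Y t a ^+ 2 *+ s) *+ m.
  rewrite mulrnBl HL /s; ring.
by apply: SOBSD; [apply: SOBSD|]; apply: SOBS_muln.
Qed.

Lemma S_lemma n (t : 'I_n -> RR) (a : 'X_{1..n}) :
  SOBS (Lsum t (mdeg a) a - Y t a ^+ 2 *+ mdeg a).
Proof.
move: {2}#|[pred l | a l != 0%N]| (leqnn #|[pred l | a l != 0%N]|) => N.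
elim: N a => [|N IH] a Ha.
  apply: S_base => i j hi; move: Ha; rewrite leqn0 => /eqP/card0_eq/(_ i).
  by rewrite !inE hi.
case: (boolP [exists i, exists j, (i != j) && (a i != 0%N) && (a j != 0%N)]).
  move=> /existsP [i /existsP [j /andP [/andP [ij ai] aj]]].
  apply: (S_step ij ai aj) => b hb; apply: IH.
  by rewrite -ltnS; exact: leq_trans hb Ha.
move=> /existsPn H; apply: S_base => i j hi hj.
apply/eqP; apply: contraT => ij; have := H i; move=> /existsPn /(_ j).
by rewrite ij hi hj.
Qed.

Lemma mnm_split n (a : 'X_{1..n}) k : (k <= mdeg a)%N ->
  exists b : 'X_{1..n}, (forall l, b l <= a l)%N /\ mdeg b = k.
Proof.
elim: k => [|k IH] hk.
  by exists 0%MM; split; [move=> l; rewrite mnm0E|rewrite mdeg0].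
have [b [hb db]] := IH (ltnW hk).
have [l hl] : exists l, (b l < a l)%N.
  apply/existsP; apply: contraT => /existsPn H.
  have : (mdeg a <= mdeg b)%N.
    rewrite !mdegE; apply: leq_sum => l _; have := H l; by rewrite -leqNgt.
  by rewrite db leqNgt hk.
exists (b + U_(l))%MM; split; last by rewrite mdegD mdeg1 db addn1.
move=> l'; rewrite mnmDE mnm1E; case: (eqVneq l l') => [<-|_]; first by rewrite addn1.
by rewrite addn0.
Qed.

Lemma Hw n (t : 'I_n -> RR) (a : 'X_{1..n}) d : mdeg a = (2 * d)%N ->
  SOBS (\sum_(k < n) Y t (U_(k) *+ (2 * d))%MM *+ a k - Y t a *+ (2 * d)).
Proof.
move=> ha.
have [b [hb db]] : exists b : 'X_{1..n}, (forall l, b l <= a l)%N /\ mdeg b = d.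
  by apply: mnm_split; rewrite ha mul2n -addnn leq_addr.
pose c := [multinom (a l - b l)%N | l < n].
have hbc : a = (b + c)%MM by apply/mnmP => l; rewrite mnmDE mnmE subnKC.
have dc : mdeg c = d.
  by move: ha; rewrite hbc mdegD db mul2n -addnn => /eqP; rewrite eqn_add2l => /eqP.
have HB := S_lemma t b; have HC := S_lemma t c.
rewrite db in HB; rewrite dc in HC.
have hU k : Y t (U_(k) *+ (2 * d))%MM = Y t (U_(k) *+ d)%MM ^+ 2.
  by rewrite Y_exp; congr (Y t _); apply/mnmP => l; rewrite !mulmnE -mulnA (mulnC d).
have -> : \sum_(k < n) Y t (U_(k) *+ (2 * d))%MM *+ a k = Lsum t d b + Lsum t d c.
  rewrite /Lsum -big_split /=; apply: eq_bigr => k _.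
  by rewrite hU -mulrnDr hbc mnmDE.
have -> : Y t a = Y t b * Y t c by rewrite Y_mul -hbc.
have -> : Lsum t d b + Lsum t d c - (Y t b * Y t c) *+ (2 * d)
   = (Lsum t d b - Y t b ^+ 2 *+ d) + (Lsum t d c - Y t c ^+ 2 *+ d)
     + (Y t b - Y t c) ^+ 2 *+ d by ring.
by apply: SOBSD; [apply: SOBSD|apply: SOBS_muln; exact: SOBS_Ysq].
Qed.

Lemma Rpow_exp (x y : RR) k : 0 < x -> Rpower.Rpower x y ^+ k = Rpower.Rpower x (y * k%:R).
Proof.
move=> _; rewrite -RpowE -Rpower.Rpower_pow; last exact: Exp_prop.exp_pos.
by rewrite Rpower.Rpower_mult INRE.
Qed.

Lemma Rpow1 (x : RR) : 0 < x -> Rpower.Rpower x 1 = x.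
Proof. by move=> /RltP hx; exact: Rpower.Rpower_1. Qed.

Lemma Tc_U n (t : 'I_n -> RR) k m : Tc t (U_(k) *+ m)%MM = t k ^+ m.
Proof.
rewrite /Tc (bigD1 k) //= big1 ?mulr1; first by rewrite mulmnE mnm1E eqxx mul1n.
by move=> l hl; rewrite mulmnE mnm1E eq_sym (negbTE hl) mul0n expr0.
Qed.

Lemma mono2dE n d (k : 'I_n) : mono2d d k = (U_(k) *+ (2 * d))%MM.
Proof.
by apply/mnmP => l; rewrite mnmE mulmnE mnm1E eq_sym; case: (k == l); rewrite ?mul1n ?mul0n.
Qed.

Lemma part2 n d (a : 'X_{1..n}) (fa : RR) :
  (0 < d)%N -> mdeg a = (2 * d)%N -> fa != 0 ->
  (fa < 0) || [exists i : 'I_n, odd (a i)] ->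
  SOBS (\sum_(k < n) ((a k)%:R * Rpower.Rpower (`|fa| / (2 * d)%:R)
                              ((2 * d)%:R / (a k * nalpha a)%:R)) *: 'X_[mono2d d k]
        + fa *: 'X_[a]).
Proof.
move=> d0 ha fa0 hsign.
set F := `|fa| / (2 * d)%:R.
have d2 : ((2 * d)%:R : RR) != 0 by rewrite pnatr_eq0 muln_eq0 /= -lt0n d0.
have key (x : RR) : x / (2 * d)%:R *+ (2 * d) = x.
  by rewrite -[x / _ *+ _]mulr_natr divfK.
have F0 : 0 < F by rewrite /F divr_gt0 ?normr_gt0 // ltr0n muln_gt0 d0.
set N := nalpha a.
have a0 : a != 0%MM by rewrite -mdeg_eq0 ha muln_eq0 /= -lt0n d0.
have N0 : (0 < N)%N.
  apply/card_gt0P; apply/existsP; apply: contraT => /existsPn H.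
  case/negP: a0; apply/eqP/mnmP => l; rewrite mnm0E; have := H l.
  by rewrite !inE negbK => /eqP.
pose t0 k := if a k == 0%N then 1 else Rpower.Rpower F (1 / (a k * N)%:R).
have t0_2d k : (a k != 0%N) -> t0 k ^+ (2 * d) = Rpower.Rpower F ((2 * d)%:R / (a k * N)%:R).
  move=> hk; rewrite /t0 (negbTE hk) Rpow_exp //; congr Rpower.Rpower.
  by rewrite mul1r mulrC.
have Tc0 : Tc t0 a = F.
  rewrite /Tc (bigID (fun k => a k != 0%N)) /= [X in _ * X]big1 ?mulr1; last first.
    by move=> k; rewrite negbK => /eqP ->; rewrite expr0.
  rewrite (eq_bigr (fun _ => Rpower.Rpower F (1 / N%:R))); last first.
    move=> k hk; rewrite /t0 (negbTE hk) Rpow_exp //; congr Rpower.Rpower.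
    by rewrite natrM; field; rewrite !pnatr_eq0 -lt0n N0 hk.
  have -> : \prod_(i < n | a i != 0%N) Rpower.Rpower F (1 / N%:R) =
     \prod_(i in [pred k | a k != 0%N]) Rpower.Rpower F (1 / N%:R) by apply: eq_bigl => k.
  rewrite prodr_const -/N Rpow_exp // mul1r mulVf ?Rpow1 //.
  by rewrite pnatr_eq0 -lt0n N0.
have [t [tp tc]] : exists t : 'I_n -> RR,
    (forall k, t k ^+ (2 * d) = t0 k ^+ (2 * d)) /\ Tc t a *+ (2 * d) = - fa.
  case: (boolP (fa < 0)) => hf.
    by exists t0; split => //; rewrite Tc0 /F ltr0_norm // key.
  move: hsign; rewrite (negbTE hf) /= => /existsP [j oj].
  exists (fun k => if k == j then - t0 k else t0 k); split.
    move=> k; case: (k == j) => //; rewrite exprNn.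
    by rewrite -signr_odd oddM /= expr0 mul1r.
  have fpos : 0 < fa by rewrite lt_def fa0 leNgt hf.
  have E0 : Tc t0 a = t0 j ^+ a j * \prod_(k < n | k != j) t0 k ^+ a k by rewrite /Tc (bigD1 j).
  rewrite /Tc (bigD1 j) //= eqxx exprNn -signr_odd oj expr1 mulN1r mulNr.
  rewrite (eq_bigr (fun k => t0 k ^+ a k)); last by move=> k /negbTE ->.
  by rewrite -E0 Tc0 /F gtr0_norm // mulNrn key.
have H := Hw t ha.
have -> : \sum_(k < n) ((a k)%:R * Rpower.Rpower F ((2 * d)%:R / (a k * N)%:R)) *: 'X_[mono2d d k]
        + fa *: 'X_[a] = \sum_(k < n) Y t (U_(k) *+ (2 * d))%MM *+ a k - Y t a *+ (2 * d).
  congr (_ + _).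
    apply: eq_bigr => k _; rewrite /Y Tc_U -mono2dE -scaler_nat scalerA; congr (_ *: _).
    case: (eqVneq (a k) 0%N) => [->|hk]; first by rewrite !mul0r.
    by rewrite tp t0_2d.
  by rewrite /Y -scaler_nat scalerA -scaleNr mulr_natl tc opprK.
exact: H.
Qed.

Lemma SOBS_sqmon n (c : RR) (h : 'X_{1..n}) : 0 <= c -> SOBS (c *: 'X_[(h + h)%MM]).
Proof.
move=> c0; exists [:: (Num.sqrt c, 0, h, h)]; rewrite big_seq1 /= scale0r subr0.
by rewrite exprZn sqr_sqrtr // mpolyXD expr2.
Qed.

Lemma SOBS_sum_seq n (I : eqType) (r : seq I) (P : pred I) (F : I -> {mpoly RR[n]}) :
  (forall i, i \in r -> P i -> SOBS (F i)) -> SOBS (\sum_(i <- r | P i) F i).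
Proof.
move=> H; rewrite big_seq_cond; apply: SOBS_sum => i /andP [hi hp]; exact: H.
Qed.

Theorem corollary2p9 (n d : nat) (f : {mpoly RR[n]}) :
  (0 < d)%N ->
  f \is (2 * d)%N.-homog ->
  (forall i : 'I_n, rhs_bound d f i <= f@_(mono2d d i)) ->
  SOBS f.
Proof.
move=> d0 hom hb.
have hdeg : {in msupp f, forall m, mdeg m = (2 * d)%N} := dhomog_mf hom.
pose vert (m : 'X_{1..n}) := [exists i : 'I_n, m == mono2d d i].
pose c (a : 'X_{1..n}) (i : 'I_n) := (a i)%:R * Rpower.Rpower (`|f@_a| / (2 * d)%:R)
                              ((2 * d)%:R / (a i * nalpha a)%:R).
have hrb i : rhs_bound d f i = \sum_(a <- msupp f | inDelta d f a) c a i.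
  rewrite /rhs_bound big_mkcondr; apply: eq_bigr => a _.
  by case: (eqVneq (a i) 0%N) => [h|] //=; rewrite /c h mul0r.
have minj : injective (mono2d d : 'I_n -> 'X_{1..n}).
  move=> i j /mnmP /(_ i); rewrite !mnmE eqxx.
  case: (eqVneq i j) => // _; move/eqP; rewrite muln_eq0 /=; move/eqP => d00; move: d0; rewrite d00.
  done.
have Vsum : \sum_(a <- msupp f | vert a) f@_a *: 'X_[a]
    = \sum_(i < n) f@_(mono2d d i) *: 'X_[mono2d d i].
  rewrite (bigID (fun i => mono2d d i \in msupp f)) /=.
  rewrite [X in _ = _ + X]big1 ?addr0; last first.
    move=> i hi; have /eqP -> : f@_(mono2d d i) == 0 by rewrite mcoeff_eq0.
    by rewrite scale0r.
  have -> : \sum_(i < n | mono2d d i \in msupp f) f@_(mono2d d i) *: 'X_[mono2d d i]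
     = \sum_(a <- [seq a <- [seq mono2d d i | i <- enum 'I_n] | a \in msupp f]) f@_a *: 'X_[a].
    by rewrite big_filter big_map big_enum_cond.
  rewrite -big_filter.
  apply: perm_big; apply: uniq_perm.
  - by apply: filter_uniq; exact: msupp_uniq.
  - apply: filter_uniq; rewrite map_inj_uniq //; exact: enum_uniq.
  move=> a; rewrite !mem_filter; apply/andP/andP.
    move=> [/existsP [i /eqP ->] hi]; split => //.
    by apply/mapP; exists i; rewrite ?mem_enum.
  move=> [hi /mapP [i _ ha]]; split => //.
  by apply/existsP; exists i; rewrite ha.
have Dvert a : inDelta d f a -> ~~ vert a.
  move=> /andP [/and3P [_ _ /forallP H] _]; apply/existsPn => i; exact: H.
have Hdec : f = \sum_(i < n) (f@_(mono2d d i) - rhs_bound d f i) *: 'X_[mono2d d i]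
     + \sum_(a <- msupp f | inDelta d f a)
          (\sum_(i < n) c a i *: 'X_[mono2d d i] + f@_a *: 'X_[a])
     + \sum_(a <- msupp f | ~~ vert a && ~~ inDelta d f a) f@_a *: 'X_[a].
  rewrite {1}(mpolyE f) (bigID vert) /= [X in _ + X](bigID (inDelta d f)) /=.
  rewrite Vsum (eq_bigl (inDelta d f)); last first.
    by move=> a; apply/andP/idP => [[]//|h]; split => //; exact: Dvert.
  rewrite big_split /=.
  have Ex : \sum_(i < n) rhs_bound d f i *: 'X_[mono2d d i] =
      \sum_(a <- msupp f | inDelta d f a) \sum_(i < n) c a i *: 'X_[mono2d d i].
    rewrite (eq_bigr (fun i => \sum_(a <- msupp f | inDelta d f a) c a i *: 'X_[mono2d d i])).
      exact: exchange_big.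
    by move=> i _; rewrite hrb scaler_suml.
  rewrite [\sum_(i < n) (_ - _) *: _](eq_bigr (fun i => f@_(mono2d d i) *: 'X_[mono2d d i] - rhs_bound d f i *: 'X_[mono2d d i]));
    last by move=> i _; rewrite scalerBl.
  rewrite sumrB Ex; ring.
rewrite Hdec; apply: SOBSD; [apply: SOBSD|].
- apply: SOBS_sum => i _.
  have e : mono2d d i = (U_(i) *+ d + U_(i) *+ d)%MM.
    by rewrite mono2dE; apply/mnmP => l; rewrite mnmDE !mulmnE -mulnDr addnn -mul2n mulnC.
  by rewrite [X in 'X_[X]]e; apply: SOBS_sqmon; rewrite subr_ge0.
- apply: SOBS_sum_seq => a ha hD; move: (hD) => /andP [/and3P [fa0 _ _] hs].
  exact: part2 d0 (hdeg a ha) fa0 hs.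
- apply: SOBS_sum_seq => a ha /andP [hv hD].
  have hO : inOmega d f a.
    apply/and3P; split.
    + by rewrite mcoeff_eq0 negbK.
    + by rewrite -mdeg_eq0 hdeg // muln_eq0 /= -lt0n d0.
    + by apply/forallP => i; apply: contra hv => /eqP ->; apply/existsP; exists i.
  move: hD; rewrite /inDelta hO /= negb_or => /andP [hf /existsPn hodd].
  pose h := [multinom (a l)./2 | l < n].
  have e : a = (h + h)%MM.
    apply/mnmP => l; rewrite mnmDE mnmE addnn halfK.
    by have := hodd l => /negbTE ->; rewrite subn0.
  rewrite [X in 'X_[X]]e; apply: SOBS_sqmon; rewrite leNgt; exact: hf.
Qed.
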